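(* Let $q>3$ be prime, $A\in\mathbb{F}_q[T]$ monic irreducible with $a=\deg A$, $t\in\mathbb{R}^\times$, and $\psi\in\mathcal{C}_0^\infty(\mathbb{R}_{>0})$. Define $H(s)=\sum_{n\in\mathbb{Z}}\psi(q^n)q^{-ns}$, $c(n,0,s)=q^{ns}+\frac{q^{n(1-s)+1-2as}}{1-q^{-2as}}$, and \[ \mathcal{I}_{1} = \log q \int_{-\frac{\pi i}{\log q}}^{\frac{\pi i}{\log q}} H(s) \sum_{n \in \mathbb{Z}} q^{ns} \left|c \left(n, 0, \tfrac{1}{2}+it \right) \right|^{2} \frac{ds}{2\pi i}, \] the contour being along the imaginary axis. Then $\mathcal{I}_1\ll 1$.
   Context: $c(n,0,s)$ is the constant term of the Fourier--Whittaker expansion at $\infty$ of the Eisenstein series $E(g,s)=\sum_{\gamma\in\Gamma_\infty\backslash\Gamma_0(A)}\left(|\det(\gamma g)|/h((0,1)\gamma g)^2\right)^s$ for $\Gamma_0(A)$ at $g=\begin{pmatrix}T^n&x\\0&1\end{pmatrix}$. The bound is uniform as $A$ varies. *)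

(* Defs.v *)
From Stdlib Require Import Reals.
From Coquelicot Require Import Coquelicot.
From mathcomp Require Import all_boot all_algebra.

Local Open Scope R_scope.

Definition qpow (q : R) (z : C) : C :=
  (exp (fst z * ln q) * cos (snd z * ln q), exp (fst z * ln q) * sin (snd z * ln q)).

Definition zpartial (f : Z -> C) (N : nat) : C :=
  List.fold_right Cplus (RtoC 0)
    (List.map (fun k => f (Z.sub (Z.of_nat k) (Z.of_nat N))) (List.seq 0 (Nat.add (Nat.mul 2 N) 1))).

(* sum over n in Z (limit of the symmetric partial sums; for finitely
   supported f this is the finite sum). *)
Definition zsum (f : Z -> C) : C :=
  (real (Lim_seq (fun N => fst (zpartial f N))), real (Lim_seq (fun N => snd (zpartial f N)))).

Definition cRInt (f : R -> C) (a b : R) : C :=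
  (RInt (fun y => fst (f y)) a b, RInt (fun y => snd (f y)) a b).

(* psi in C_0^infty(R_{>0}), extended by 0 to R. *)
Definition test_fun (psi : R -> C) : Prop :=
  (forall (k : nat) (x : R), ex_derive_n (fun y => fst (psi y)) k x
                         /\ ex_derive_n (fun y => snd (psi y)) k x) /\
  exists lo hi : R, 0 < lo /\ lo <= hi /\
    forall x : R, (x < lo \/ hi < x) -> psi x = RtoC 0.

Definition Hmel (q : R) (psi : R -> C) (s : C) : C :=
  zsum (fun n => Cmult (psi (powerRZ q n)) (qpow q (Copp (Cmult (RtoC (IZR n)) s)))).

Definition c0 (q : R) (a : nat) (n : Z) (s : C) : C :=
  Cplus (qpow q (Cmult (RtoC (IZR n)) s))
        (Cdiv (qpow q (Cplus (Cplus (Cmult (RtoC (IZR n)) (Cminus (RtoC 1) s)) (RtoC 1))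
                             (Copp (Cmult (RtoC (2 * INR a)) s))))
              (Cminus (RtoC 1) (qpow q (Copp (Cmult (RtoC (2 * INR a)) s))))).

(* I_1 = log q int_{-pi i/log q}^{pi i/log q} H(s) sum_n q^{ns} |c(n,0,1/2+it)|^2 ds/(2 pi i),
   along the imaginary axis s = i y (so ds/(2 pi i) = dy/(2 pi)), with the
   n-sum taken outside the integral. *)
Definition I1 (q : R) (a : nat) (psi : R -> C) (t : R) : C :=
  zsum (fun n =>
    Cmult (Cmult (RtoC (ln q))
            (cRInt (fun y => Cmult (Hmel q psi (0, y)) (qpow q (Cmult (RtoC (IZR n)) (0, y))))
                   (- PI / ln q) (PI / ln q)))
          (RtoC (/ (2 * PI) * (Cmod (c0 q a n (1/2, t))) ^ 2))).

(* Main.v *)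
Require Import Defs.
From Stdlib Require Import Reals.
From Coquelicot Require Import Coquelicot.
From Stdlib Require Import Lra Lia.

Section Helpers.
Local Open Scope R_scope.


Lemma fold_Cplus_acc (l : list C) (a : C) :
  List.fold_right Cplus a l = Cplus (List.fold_right Cplus (RtoC 0) l) a.
Proof.
  induction l as [|x l IH]; simpl.
  - destruct a; unfold Cplus, RtoC; simpl; f_equal; lra.
  - rewrite IH. destruct x, a, (List.fold_right Cplus (RtoC 0) l); unfold Cplus; simpl; f_equal; lra.
Qed.

Lemma zpartial_S f N :
  zpartial f (S N) = Cplus (f (- Z.of_nat (S N))%Z) (Cplus (zpartial f N) (f (Z.of_nat (S N)))).
Proof.
  unfold zpartial.
  set (L := Nat.add (Nat.mul 2 N) 1).
  replace (Nat.add (Nat.mul 2 (S N)) 1) with (S (S L)) by (unfold L; lia).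
  change (List.seq 0 (S (S L))) with (0%nat :: List.seq 1 (S L))%list.
  rewrite (List.seq_S L 1), <- (List.seq_shift L 0), List.map_cons, List.map_app, List.map_map.
  cbn [List.fold_right]. rewrite List.fold_right_app. cbn [List.map List.fold_right].
  rewrite fold_Cplus_acc.
  replace (Z.of_nat 0 - Z.of_nat (S N))%Z with (- Z.of_nat (S N))%Z by lia.
  replace (Z.of_nat (1 + L) - Z.of_nat (S N))%Z with (Z.of_nat (S N)) by (unfold L; lia).
  rewrite (List.map_ext (fun x => f (Z.of_nat (S x) - Z.of_nat (S N))%Z)
             (fun k => f (Z.of_nat k - Z.of_nat N)%Z)).
  2:{ intros k; f_equal; lia. }
  destruct (f (- Z.of_nat (S N))%Z), (f (Z.of_nat (S N))),
    (List.fold_right Cplus (RtoC 0) (List.map (fun k => f (Z.of_nat k - Z.of_nat N)%Z) (List.seq 0 L))).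
  unfold Cplus, RtoC; simpl; f_equal; lra.
Qed.

Lemma zpartial_stable f M :
  (forall n, (Z.of_nat M < Z.abs n)%Z -> f n = RtoC 0) ->
  forall k, zpartial f (k + M)%nat = zpartial f M.
Proof.
  intros Hf k; induction k as [|k IH]; [reflexivity|].
  replace (S k + M)%nat with (S (k + M)) by lia.
  rewrite zpartial_S, IH, !Hf by lia.
  destruct (zpartial f M); unfold Cplus, RtoC; simpl; f_equal; lra.
Qed.

Lemma zsum_fin f M :
  (forall n, (Z.of_nat M < Z.abs n)%Z -> f n = RtoC 0) ->
  zsum f = zpartial f M.
Proof.
  intros Hf. unfold zsum.
  rewrite (Lim_seq_ext_loc _ (fun _ => fst (zpartial f M))).
  2:{ exists M. intros N HN. replace N with ((N - M) + M)%nat by lia.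
      now rewrite zpartial_stable. }
  rewrite (Lim_seq_ext_loc (fun N => snd (zpartial f N)) (fun _ => snd (zpartial f M))).
  2:{ exists M. intros N HN. replace N with ((N - M) + M)%nat by lia.
      now rewrite zpartial_stable. }
  rewrite !Lim_seq_const. simpl. now destruct (zpartial f M).
Qed.

Lemma pow_gt_INR q k : 2 <= q -> INR k < q ^ k.
Proof.
  intros Hq; induction k as [|k IH]; [simpl; lra|].
  assert (1 <= q ^ k) by (apply pow_R1_Rle; lra).
  rewrite S_INR. change (q ^ S k) with (q * q ^ k). nra.
Qed.

Lemma support psi q : test_fun psi -> 2 <= q ->
  exists M : nat, forall m, (Z.of_nat M < Z.abs m)%Z -> psi (powerRZ q m) = RtoC 0.
Proof.
  intros [_ [lo [hi [Hlo [Hlh Hz]]]]] Hq.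
  destruct (INR_archimed 1 (Rmax hi (/ lo))) as [M HM]; [lra|].
  exists M. intros m Hm. apply Hz.
  assert (Hmax1 := Rmax_l hi (/ lo)). assert (Hmax2 := Rmax_r hi (/ lo)).
  destruct m as [|p|p]; simpl in Hm.
  - lia.
  - right. simpl. assert (HM' : (M < Pos.to_nat p)%nat) by lia.
    apply lt_INR in HM'. assert (H1 := pow_gt_INR q (Pos.to_nat p) Hq). lra.
  - left. simpl. assert (HM' : (M < Pos.to_nat p)%nat) by lia.
    apply lt_INR in HM'. assert (H1 := pow_gt_INR q (Pos.to_nat p) Hq).
    assert (Hil : 0 < / lo) by (apply Rinv_0_lt_compat; lra).
    rewrite <- (Rinv_inv lo).
    apply Rinv_lt_contravar; [nra|]. lra.
Qed.

Lemma sin_kPI k : sin (IZR k * PI) = 0.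
Proof. apply sin_eq_0_1. now exists k. Qed.

Lemma int_trig (L : R) (k : Z) (cr ci : R) : 0 < L ->
  is_RInt (fun y => cr * cos (IZR k * L * y) - ci * sin (IZR k * L * y)) (- PI / L) (PI / L)
    (if Z.eq_dec k 0 then 2 * PI / L * cr else 0) /\
  is_RInt (fun y => cr * sin (IZR k * L * y) + ci * cos (IZR k * L * y)) (- PI / L) (PI / L)
    (if Z.eq_dec k 0 then 2 * PI / L * ci else 0).
Proof.
  intros HL. destruct (Z.eq_dec k 0) as [->|Hk].
  - split.
    + apply (is_RInt_ext (fun _ => cr)).
      { intros y _. rewrite Rmult_0_l, Rmult_0_l, cos_0, sin_0. ring_simplify; reflexivity. }
      replace (2 * PI / L * cr) with (scal (PI / L - - PI / L) cr).
      { exact (@is_RInt_const R_NormedModule _ _ _). }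
      unfold scal; simpl; unfold mult; simpl. field. lra.
    + apply (is_RInt_ext (fun _ => ci)).
      { intros y _. rewrite Rmult_0_l, Rmult_0_l, cos_0, sin_0, Rmult_1_r, Rmult_0_r; try rewrite Rminus_0_r; try rewrite Rplus_0_l; reflexivity. }
      replace (2 * PI / L * ci) with (scal (PI / L - - PI / L) ci).
      { exact (@is_RInt_const R_NormedModule _ _ _). }
      unfold scal; simpl; unfold mult; simpl. field. lra.
  - assert (HK : IZR k <> 0) by (apply not_0_IZR; exact Hk).
    assert (Hb : IZR k * L * (PI / L) = IZR k * PI) by (field; lra).
    assert (Ha : IZR k * L * (- PI / L) = - (IZR k * PI)) by (field; lra).
    split.
    + set (F := fun y => (cr * sin (IZR k * L * y) + ci * cos (IZR k * L * y)) / (IZR k * L)).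
      replace 0 with (minus (F (PI / L)) (F (- PI / L))).
      2:{ unfold F, minus, plus, opp; simpl. rewrite Hb, Ha, sin_neg, cos_neg, sin_kPI. field.
          split; lra. }
      apply (@is_RInt_derive R_CompleteNormedModule).
      * intros x _. unfold F. auto_derive; [auto|]. field. split; lra.
      * intros x _. apply (@ex_derive_continuous R_AbsRing R_NormedModule). auto_derive. auto.
    + set (F := fun y => (- cr * cos (IZR k * L * y) + ci * sin (IZR k * L * y)) / (IZR k * L)).
      replace 0 with (minus (F (PI / L)) (F (- PI / L))).
      2:{ unfold F, minus, plus, opp; simpl. rewrite Hb, Ha, sin_neg, cos_neg, sin_kPI. field.
          split; lra. }
      apply (@is_RInt_derive R_CompleteNormedModule).
      * intros x _. unfold F. auto_derive; [auto|]. field. split; lra.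
      * intros x _. apply (@ex_derive_continuous R_AbsRing R_NormedModule). auto_derive. auto.
Qed.

Lemma qpow_iy q n y : qpow q (Cmult (RtoC (IZR n)) (0, y)) = (cos (IZR n * ln q * y), sin (IZR n * ln q * y)).
Proof.
  unfold qpow, Cmult, RtoC; simpl.
  replace ((IZR n * 0 - 0 * y) * ln q) with 0 by ring. rewrite exp_0.
  replace ((IZR n * y + 0 * 0) * ln q) with (IZR n * ln q * y) by ring. f_equal; ring.
Qed.

Lemma qpow_miy q m y : qpow q (Copp (Cmult (RtoC (IZR m)) (0, y))) = (cos (IZR m * ln q * y), - sin (IZR m * ln q * y)).
Proof.
  unfold qpow, Cmult, Copp, RtoC; simpl.
  replace (- (IZR m * 0 - 0 * y) * ln q) with 0 by ring. rewrite exp_0.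
  replace (- (IZR m * y + 0 * 0) * ln q) with (- (IZR m * ln q * y)) by ring.
  rewrite cos_neg, sin_neg. f_equal; ring.
Qed.

Lemma term_eq (c : C) L m n y :
  Cmult (Cmult c (cos (IZR m * L * y), - sin (IZR m * L * y))) (cos (IZR n * L * y), sin (IZR n * L * y))
  = (fst c * cos (IZR (n - m) * L * y) - snd c * sin (IZR (n - m) * L * y),
     fst c * sin (IZR (n - m) * L * y) + snd c * cos (IZR (n - m) * L * y)).
Proof.
  rewrite minus_IZR.
  replace ((IZR n - IZR m) * L * y) with (IZR n * L * y - IZR m * L * y) by ring.
  rewrite cos_minus, sin_minus. destruct c as [cr ci]. unfold Cmult; simpl. f_equal; ring.
Qed.

Lemma CmD_fst u S E : fst (Cmult (Cplus u S) E) = fst (Cmult u E) + fst (Cmult S E).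
Proof. destruct u, S, E; unfold Cmult, Cplus; simpl; ring. Qed.
Lemma CmD_snd u S E : snd (Cmult (Cplus u S) E) = snd (Cmult u E) + snd (Cmult S E).
Proof. destruct u, S, E; unfold Cmult, Cplus; simpl; ring. Qed.

Lemma is_RInt_zero a b : is_RInt (fun _ => 0) a b 0.
Proof.
  assert (H := @is_RInt_const R_NormedModule a b 0).
  unfold scal in H; simpl in H; unfold mult in H; simpl in H. rewrite Rmult_0_r in H. exact H.
Qed.

Section ListInt.
Variables (q : R) (c : Z -> C) (j : nat -> Z) (n : Z).
Hypothesis Hq : 0 < ln q.

Definition hS (l : list nat) (y : R) : C :=
  List.fold_right Cplus (RtoC 0)
    (List.map (fun k => Cmult (c (j k)) (qpow q (Copp (Cmult (RtoC (IZR (j k))) (0, y))))) l).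

Definition vS (l : list nat) (f : C -> R) : R :=
  List.fold_right Rplus 0
    (List.map (fun k => if Z.eq_dec (n - j k) 0 then 2 * PI / ln q * f (c (j k)) else 0) l).

Lemma list_int (l : list nat) :
  is_RInt (fun y => fst (Cmult (hS l y) (qpow q (Cmult (RtoC (IZR n)) (0, y))))) (- PI / ln q) (PI / ln q) (vS l fst) /\
  is_RInt (fun y => snd (Cmult (hS l y) (qpow q (Cmult (RtoC (IZR n)) (0, y))))) (- PI / ln q) (PI / ln q) (vS l snd).
Proof.
  induction l as [|k l [IH1 IH2]].
  - split; (eapply is_RInt_ext; [|apply is_RInt_zero]);
      intros y _; unfold hS, Cmult, RtoC; simpl; ring_simplify; reflexivity.
  - destruct (int_trig (ln q) (n - j k) (fst (c (j k))) (snd (c (j k))) Hq) as [T1 T2].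
    assert (TE := fun y => term_eq (c (j k)) (ln q) (j k) n y).
    split.
    + replace (vS (k :: l) fst) with (plus (if Z.eq_dec (n - j k) 0 then 2 * PI / ln q * fst (c (j k)) else 0) (vS l fst)) by reflexivity.
      eapply is_RInt_ext; [|exact (is_RInt_plus _ _ _ _ _ _ T1 IH1)].
      intros y _.
      change (hS (k::l) y) with (Cplus (Cmult (c (j k)) (qpow q (Copp (Cmult (RtoC (IZR (j k))) (0,y))))) (hS l y)).
      rewrite CmD_fst, (qpow_miy q (j k) y), (qpow_iy q n y), (TE y). reflexivity.
    + replace (vS (k :: l) snd) with (plus (if Z.eq_dec (n - j k) 0 then 2 * PI / ln q * snd (c (j k)) else 0) (vS l snd)) by reflexivity.
      eapply is_RInt_ext; [|exact (is_RInt_plus _ _ _ _ _ _ T2 IH2)].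
      intros y _.
      change (hS (k::l) y) with (Cplus (Cmult (c (j k)) (qpow q (Copp (Cmult (RtoC (IZR (j k))) (0,y))))) (hS l y)).
      rewrite CmD_snd, (qpow_miy q (j k) y), (qpow_iy q n y), (TE y). reflexivity.
Qed.
End ListInt.

Lemma exp_mono x y : x <= y -> exp x <= exp y.
Proof. intros [H|H]; [left; now apply exp_increasing|right; now subst]. Qed.

Lemma vS_zero q c j n l f :
  (forall k, List.In k l -> (n - j k)%Z <> 0%Z) -> vS q c j n l f = 0.
Proof.
  induction l as [|k l IH]; intros H; [reflexivity|].
  unfold vS; cbn [List.map List.fold_right]. fold (vS q c j n l f).
  rewrite IH by (intros; apply H; now right).
  destruct (Z.eq_dec (n - j k) 0) as [E|E]; [exfalso; apply (H k); [now left|exact E]|]. ring.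
Qed.

Lemma vS_bound q c j n l f : 0 < ln q -> (forall z, Rabs (f z) <= Cmod z) ->
  Rabs (vS q c j n l f) <= 2 * PI / ln q * List.fold_right Rplus 0 (List.map (fun k => Cmod (c (j k))) l).
Proof.
  intros Hq Hf. assert (HP : 0 < 2 * PI / ln q) by (apply Rdiv_lt_0_compat; [assert (PI_RGT_0 := PI_RGT_0); lra|exact Hq]).
  induction l as [|k l IH].
  - unfold vS; simpl. rewrite Rabs_R0. lra.
  - unfold vS; cbn [List.map List.fold_right]. fold (vS q c j n l f).
    eapply Rle_trans; [apply Rabs_triang|].
    rewrite Rmult_plus_distr_l. apply Rplus_le_compat; [|exact IH].
    destruct (Z.eq_dec (n - j k) 0).
    + rewrite Rabs_mult, (Rabs_right (2 * PI / ln q)) by lra.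
      apply Rmult_le_compat_l; [lra|apply Hf].
    + rewrite Rabs_R0. apply Rmult_le_pos; [lra|apply Cmod_ge_0].
Qed.

Lemma sum_nonneg l (F : nat -> R) : (forall k, 0 <= F k) -> 0 <= List.fold_right Rplus 0 (List.map F l).
Proof. intros H; induction l; simpl; [lra|]. specialize (H a). lra. Qed.

Lemma Cmod_le_sum (z : C) : Cmod z <= Rabs (fst z) + Rabs (snd z).
Proof.
  destruct z as [a b]. unfold Cmod; simpl.
  rewrite <- (sqrt_Rsqr (Rabs a + Rabs b)) by (assert (H1 := Rabs_pos a); assert (H2 := Rabs_pos b); lra).
  apply sqrt_le_1_alt. unfold Rsqr.
  assert (H1 := Rabs_pos a); assert (H2 := Rabs_pos b).
  assert (Ea : a * a = Rabs a * Rabs a) by (rewrite <- Rabs_mult; rewrite Rabs_right; nra).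
  assert (Eb : b * b = Rabs b * Rabs b) by (rewrite <- Rabs_mult; rewrite Rabs_right; nra).
  nra.
Qed.

Lemma Cmod_fold (l : list nat) (F : nat -> C) B : (forall k, Cmod (F k) <= B) ->
  Cmod (List.fold_right Cplus (RtoC 0) (List.map F l)) <= INR (length l) * B.
Proof.
  intros H; induction l as [|k l IH].
  - simpl. rewrite Cmod_0. lra.
  - cbn [List.map List.fold_right length]. eapply Rle_trans; [apply Cmod_triangle|]. rewrite S_INR. specialize (H k). lra.
Qed.

Lemma Cmod_qpow q z : Cmod (qpow q z) = exp (fst z * ln q).
Proof.
  unfold Cmod, qpow; cbn [fst snd].
  set (e := exp (fst z * ln q)). set (u := snd z * ln q).
  replace ((e * cos u) ^ 2 + (e * sin u) ^ 2) with (Rsqr e).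
  - apply sqrt_Rsqr. unfold e. left; apply exp_pos.
  - unfold Rsqr. assert (H := sin2_cos2 u). unfold Rsqr in H. nra.
Qed.

Lemma Cmod_1_minus w : 1 - Cmod w <= Cmod (Cminus (RtoC 1) w).
Proof.
  assert (H := Cmod_triangle (Cminus (RtoC 1) w) w).
  replace (Cplus (Cminus (RtoC 1) w) w) with (RtoC 1) in H.
  - rewrite Cmod_1 in H. lra.
  - destruct w; unfold Cminus, Cplus, Copp, RtoC; simpl; f_equal; ring.
Qed.

Lemma c0_bound q a n t M : 4 <= q -> (1 <= a)%nat -> (Z.abs n <= Z.of_nat M)%Z ->
  Cmod (c0 q a n (1/2, t)) <= 3 * exp (INR M * ln q).
Proof.
  intros Hq Ha Hn.
  assert (HL : 0 < ln q) by (rewrite <- ln_1; apply ln_increasing; lra).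
  assert (HnM : Rabs (IZR n) <= INR M).
  { rewrite <- abs_IZR, INR_IZR_INZ. apply IZR_le. exact Hn. }
  assert (Hab := Rle_abs (IZR n)).
  assert (Ha1 : 1 <= INR a) by (apply (le_INR 1); exact Ha).
  assert (HE : 0 < exp (INR M * ln q)) by apply exp_pos.
  unfold c0. eapply Rle_trans; [apply Cmod_triangle|].
  set (w := qpow q (Copp (Cmult (RtoC (2 * INR a)) (1 / 2, t)))).
  assert (Hw : Cmod w <= / 4).
  { unfold w. rewrite Cmod_qpow. simpl.
    replace (- (2 * INR a * (1 / 2) - 0 * t) * ln q) with (- (INR a * ln q)) by field.
    eapply Rle_trans. { apply exp_mono. instantiate (1 := - ln q). nra. }
    rewrite exp_Ropp, exp_ln by lra. apply Rinv_le_contravar; lra. }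
  assert (Hd := Cmod_1_minus w).
  assert (Hd0 : Cminus (RtoC 1) w <> RtoC 0).
  { intros E. rewrite E, Cmod_0 in Hd. lra. }
  rewrite Cmod_div by exact Hd0. rewrite !Cmod_qpow. simpl.
  assert (H1 : exp ((IZR n * (1 / 2) - 0 * t) * ln q) <= exp (INR M * ln q)).
  { apply exp_mono. apply Rmult_le_compat_r; [lra|]. assert (HH := Rabs_pos (IZR n)). lra. }
  assert (H2 : exp ((IZR n * (1 + - (1 / 2)) - 0 * (0 + - t) + 1 + - (2 * INR a * (1 / 2) - 0 * t)) * ln q) <= exp (INR M * ln q)).
  { apply exp_mono. apply Rmult_le_compat_r; [lra|]. assert (HH := Rabs_pos (IZR n)). lra. }
  set (X := exp ((IZR n * (1 + - (1 / 2)) - 0 * (0 + - t) + 1 + - (2 * INR a * (1 / 2) - 0 * t)) * ln q)) in *.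
  assert (HX : 0 < X) by apply exp_pos.
  assert (X / Cmod (Cminus (RtoC 1) w) <= 2 * exp (INR M * ln q)).
  { unfold Rdiv. apply (Rmult_le_reg_r (Cmod (Cminus (RtoC 1) w))); [lra|].
    rewrite Rmult_assoc, Rinv_l by lra. nra. }
  lra.
Qed.

Lemma im_le_Cmod' (z : C) : Rabs (snd z) <= Cmod z.
Proof. eapply Rle_trans; [apply Rmax_r|apply Rmax_Cmod]. Qed.
Lemma re_le_Cmod' (z : C) : Rabs (fst z) <= Cmod z.
Proof. eapply Rle_trans; [apply Rmax_l|apply Rmax_Cmod]. Qed.

Lemma main_R (q : R) psi t : 4 <= q -> test_fun psi ->
  exists K, forall a : nat, (1 <= a)%nat -> Cmod (I1 q a psi t) <= K.
Proof.
  intros Hq Hpsi.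
  assert (HL : 0 < ln q) by (rewrite <- ln_1; apply ln_increasing; lra).
  assert (HPI := PI_RGT_0).
  destruct (support psi q Hpsi) as [M HM]; [lra|].
  set (c := fun m => psi (powerRZ q m)).
  set (j := fun k => (Z.of_nat k - Z.of_nat M)%Z).
  set (l := List.seq 0 (Nat.add (Nat.mul 2 M) 1)).
  set (P := List.fold_right Rplus 0 (List.map (fun k => Cmod (c (j k))) l)).
  assert (HP : 0 <= P) by (apply sum_nonneg; intros; apply Cmod_ge_0).
  set (E := exp (INR M * ln q)).
  set (B := 2 * P * (3 * E) ^ 2).
  assert (HB : 0 <= B) by (unfold B; assert (0 <= (3 * E) ^ 2) by apply pow2_ge_0; nra).
  exists (INR (length l) * B). intros a Ha.
  assert (HH : forall y, Hmel q psi (0, y) = hS q c j l y).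
  { intros y. unfold Hmel. rewrite (zsum_fin _ M); [reflexivity|].
    intros n Hn. rewrite HM by exact Hn. unfold Cmult, RtoC; simpl; f_equal; ring. }
  assert (HI : forall n, cRInt (fun y => Cmult (Hmel q psi (0, y)) (qpow q (Cmult (RtoC (IZR n)) (0, y))))
                 (- PI / ln q) (PI / ln q) = (vS q c j n l fst, vS q c j n l snd)).
  { intros n. unfold cRInt. destruct (list_int q c j n HL l) as [T1 T2]. f_equal.
    - rewrite <- (is_RInt_unique _ _ _ _ T1). apply RInt_ext. intros; now rewrite HH.
    - rewrite <- (is_RInt_unique _ _ _ _ T2). apply RInt_ext. intros; now rewrite HH. }
  assert (Hout : forall n, (Z.of_nat M < Z.abs n)%Z -> forall f, vS q c j n l f = 0).
  { intros n Hn f. apply vS_zero. intros k Hk. apply List.in_seq in Hk. unfold j. lia. }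
  assert (Hg : forall n, Cmod (Cmult (Cmult (RtoC (ln q))
       (cRInt (fun y => Cmult (Hmel q psi (0, y)) (qpow q (Cmult (RtoC (IZR n)) (0, y))))
              (- PI / ln q) (PI / ln q)))
       (RtoC (/ (2 * PI) * (Cmod (c0 q a n (1/2, t))) ^ 2))) <= B).
  { intros n. rewrite HI. rewrite !Cmod_mult, !Cmod_R.
    rewrite (Rabs_right (ln q)) by lra.
    assert (HD0 : 0 <= Cmod (c0 q a n (1 / 2, t)) ^ 2) by apply pow2_ge_0.
    assert (Hi : 0 < / (2 * PI)) by (apply Rinv_0_lt_compat; lra).
    rewrite (Rabs_right (/ (2 * PI) * _)) by nra.
    set (V := Cmod (vS q c j n l fst, vS q c j n l snd)).
    assert (HV0 : 0 <= V) by apply Cmod_ge_0.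
    destruct (Z.lt_ge_cases (Z.of_nat M) (Z.abs n)) as [Hn|Hn].
    - unfold V. rewrite !Hout by exact Hn.
      replace (Cmod (0, 0)) with 0 by (symmetry; apply Cmod_0). nra.
    - assert (HV : V <= 2 * (2 * PI / ln q * P)).
      { eapply Rle_trans; [apply Cmod_le_sum|]. cbn [fst snd].
        assert (A1 := vS_bound q c j n l fst HL re_le_Cmod').
        assert (A2 := vS_bound q c j n l snd HL im_le_Cmod').
        fold P in A1, A2. lra. }
      assert (HC := c0_bound q a n t M Hq Ha Hn). fold E in HC.
      assert (HD : Cmod (c0 q a n (1 / 2, t)) ^ 2 <= (3 * E) ^ 2).
      { apply pow_incr. split; [apply Cmod_ge_0|exact HC]. }
      assert (HV' : ln q * V * / (2 * PI) <= 2 * P).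
      { replace (2 * P) with (ln q * (2 * (2 * PI / ln q * P)) * / (2 * PI)) by (field; lra).
        apply Rmult_le_compat_r; [lra|]. apply Rmult_le_compat_l; lra. }
      unfold B. rewrite <- Rmult_assoc.
      apply Rmult_le_compat; [apply Rmult_le_pos; [apply Rmult_le_pos|]; lra|exact HD0|exact HV'|exact HD]. }
  unfold I1. rewrite (zsum_fin _ M).
  - unfold zpartial. apply Cmod_fold. intros k. apply Hg.
  - intros n Hn. rewrite HI, !Hout by exact Hn. unfold Cmult, RtoC; simpl; f_equal; ring.
Qed.

Lemma main_nat (q : nat) psi t : (4 <= q)%nat -> test_fun psi ->
  exists K, forall a : nat, (1 <= a)%nat -> Cmod (I1 (INR q) a psi t) <= K.
Proof.
  intros H Hp. apply main_R; [|exact Hp].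
  apply le_INR in H. simpl in H. lra.
Qed.
End Helpers.

From mathcomp Require Import all_boot all_algebra.

Theorem lemma3p7 (q : nat) (hq : prime q) (hq3 : (3 < q)%N)
    (psi : R -> C) (hpsi : test_fun psi) (t : R) (ht : t <> R0) :
  exists K : R, forall A : {poly 'F_q},
    A \is monic -> irreducible_poly A ->
    Rle (Cmod (I1 (INR q) (size A).-1 psi t)) K.
Proof.
  have H4 : (4 <= q)%coq_nat by apply/leP.
  destruct (main_nat q psi t H4 hpsi) as [K HK].
  exists K. move=> A _ [Hs _]. apply HK.
  move/ltP: Hs. case: (size A) => [|[|s]] Hs /=; lia.
Qed.
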